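(* Let $\mathbf{A}$ be a 5-dimensional LV algebra with natural basis $e_1,\dots,e_5$ such that $e_2e_4=\frac12(e_2+e_4)$, $e_2e_5=\frac12(e_2+e_5)$, and $e_ie_j\neq\frac12(e_i+e_j)$ for all other pairs of distinct indices $i,j$. Then $\mathrm{Der}(\mathbf{A})=\{0\}$.
   Context: Let $\mathbb{F}$ be a field of characteristic different from $2$. A Lotka–Volterra (LV) algebra of dimension $5$ over $\mathbb{F}$ is a commutative (not necessarily associative) $\mathbb{F}$-algebra $\mathbf{A}$ with a basis $e_1,\dots,e_5$ (the natural basis) such that $e_ie_j=\alpha_{ij}e_i+\alpha_{ji}e_j$ with $\alpha_{ij}\in\mathbb{F}$, $\alpha_{ii}=\frac12$ and $\alpha_{ij}+\alpha_{ji}=1$ for all $i,j$. A derivation is a linear map $D:\mathbf{A}\to\mathbf{A}$ with $D(uv)=D(u)v+uD(v)$ for all $u,v$; $\mathrm{Der}(\mathbf{A})$ is the set of derivations. *)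

(* Defs.v *)
From HB Require Import structures.
From mathcomp Require Import all_boot all_order all_algebra.
Set Implicit Arguments. Unset Strict Implicit. Unset Printing Implicit Defensive.
Import Order.TTheory GRing.Theory Num.Theory.
Local Open Scope ring_scope.

(* Elements of the 5-dim algebra are row vectors of coordinates w.r.t. the
   natural basis e_0,...,e_4 (0-based: paper's e_{k+1} is our e k). *)
Definition e (F : fieldType) (k : 'I_5) : 'rV[F]_5 := delta_mx 0 k.

(* Structure constants a : e_i e_j = a i j e_i + a j i e_j. *)
Definition is_LV (F : fieldType) (a : 'M[F]_5) : Prop :=
  (forall i, a i i = 2^-1) /\ (forall i j, a i j + a j i = 1).

(* Bilinear extension of e_i e_j = a i j e_i + a j i e_j:
   (u v)_k = sum_j u_k v_j a_kj + sum_i u_i v_k a_ki. *)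
Definition lv_mul (F : fieldType) (a : 'M[F]_5) (u v : 'rV[F]_5) : 'rV[F]_5 :=
  \row_k (\sum_j u 0 k * v 0 j * a k j + \sum_i u 0 i * v 0 k * a k i).

(* A linear map is represented by its matrix D acting on the right: u |-> u *m D. *)
Definition is_derivation (F : fieldType) (a : 'M[F]_5) (D : 'M[F]_5) : Prop :=
  forall u v : 'rV[F]_5,
    lv_mul a u v *m D = lv_mul a (u *m D) v + lv_mul a u (v *m D).

(* Main.v *)
Require Import Defs.
From HB Require Import structures.
From mathcomp Require Import all_boot all_order all_algebra.
From mathcomp Require Import ring.
Import Order.TTheory GRing.Theory Num.Theory.
Local Open Scope ring_scope.

Section S.
Variables (F : fieldType) (a : 'M[F]_5).

Lemma eE k m : (e F k) 0 m = (k == m)%:R.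
Proof. by rewrite /e mxE eqxx /= eq_sym. Qed.

Lemma lvE i j k : (lv_mul a (e F i) (e F j)) 0 k = (i == k)%:R * a k j + (j == k)%:R * a k i.
Proof.
rewrite mxE (bigD1 j) //= (bigD1 i (P:= xpredT)) //= !big1 ?addr0.
all: try by move=> m /negbTE ne; rewrite !eE [_ == m]eq_sym ne /=; ring.
by rewrite !eE !eqxx mulr1 mul1r.
Qed.

Definition SS (D : 'M[F]_5) i k := \sum_m D i m * a k m.

Lemma lvL (D : 'M[F]_5) i j k :
  (lv_mul a (row i D) (e F j)) 0 k = D i k * a k j + (j == k)%:R * SS D i k.
Proof.
rewrite mxE (bigD1 j) //= big1 ?addr0.
all: try by move=> m /negbTE ne; rewrite !eE [_ == m]eq_sym ne /=; ring.
rewrite !eE eqxx !mxE /= mulr1; congr (_ + _).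
rewrite /SS mulr_sumr.
by apply: eq_bigr => m _; rewrite !mxE; ring.
Qed.

Lemma lvR (D : 'M[F]_5) i j k :
  (lv_mul a (e F i) (row j D)) 0 k = (i == k)%:R * SS D j k + D j k * a k i.
Proof.
rewrite mxE addrC (bigD1 i) //= big1 ?addr0.
all: try by move=> m /negbTE ne; rewrite !eE [_ == m]eq_sym ne /=; ring.
rewrite !eE eqxx !mxE /= mul1r addrC; congr (_ + _).
rewrite /SS mulr_sumr.
by apply: eq_bigr => m _; rewrite !mxE; ring.
Qed.

Lemma lvD (D : 'M[F]_5) i j k :
  (lv_mul a (e F i) (e F j) *m D) 0 k = a i j * D i k + a j i * D j k.
Proof.
rewrite mxE. under eq_bigr => m _ do rewrite lvE mulrDl.
rewrite big_split /= (bigD1 i) //= (bigD1 j (P:=xpredT)) //= !big1 ?addr0.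
all: try by move=> m /negbTE ne; rewrite [_ == m]eq_sym ne /=; ring.
by rewrite !eqxx /= !mul1r.
Qed.

Lemma deq D i j k : is_derivation a D ->
  a i j * D i k + a j i * D j k =
  D i k * a k j + (j == k)%:R * SS D i k + ((i == k)%:R * SS D j k + D j k * a k i).
Proof.
move=> HD; have /rowP/(_ k) := HD (e F i) (e F j).
rewrite lvD /e -!rowE mxE -/(e F i) -/(e F j) lvL lvR => ->; ring.
Qed.

Hypothesis two : (2%:R : F) != 0.
Hypothesis LV : is_LV a.

Lemma aneq i j : i != j -> lv_mul a (e F i) (e F j) != 2^-1 *: (e F i + e F j) -> a i j != 2^-1.
Proof.
move=> nij; apply: contra => /eqP aij; apply/eqP/rowP => k.
have aji : a j i = 2^-1 by have := LV.2 i j; rewrite aij => h; rewrite -(addKr 2^-1 (a j i)) h; field.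
rewrite lvE !mxE /= [k == i]eq_sym [k == j]eq_sym.
case: (eqVneq i k) => [ik|nik]; case: (eqVneq j k) => [jk|njk].
- by case/eqP: nij; rewrite ik jk.
- by subst; rewrite aij /= ?mulr1n ?mulr0n; field.
- by subst; rewrite ?aji ?aij /= ?mulr1n ?mulr0n; field.
- by rewrite /= !mulr0n; ring.
Qed.

Lemma aspec i j : i != j -> lv_mul a (e F i) (e F j) = 2^-1 *: (e F i + e F j) ->
  a i j = 2^-1 /\ a j i = 2^-1.
Proof.
move=> nij /rowP/(_ i); rewrite lvE !mxE /= eqxx eq_sym (negbTE nij) /= mulr0n mulr1n mul0r addr0 addr0 mul1r mulr1 => aij.
split=> //; have := LV.2 i j; rewrite aij => h2; apply: (addrI 2^-1); by rewrite h2; field.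
Qed.

Variable D : 'M[F]_5.
Hypothesis HD : is_derivation a D.

Lemma canc (x y : F) : x != 2^-1 -> y = 2%:R * x * y -> y = 0.
Proof.
move=> nx H; have : (1 - 2%:R * x) * y = 0 by rewrite mulrBl mul1r -H subrr.
move/eqP; rewrite mulf_eq0 => /orP[|/eqP//]; rewrite subr_eq0 => /eqP h.
by case/negP: nx; apply/eqP; apply: (mulfI two); rewrite -h mulfV.
Qed.

Lemma step1 i k : k != i -> a k i != 2^-1 -> D i k = 0.
Proof.
move=> nki nx; apply: (@canc (a k i) (D i k) nx).
have := deq D i i k HD; rewrite eq_sym (negbTE nki) LV.1 /= mulr0n !mul0r add0r addr0 => E.
transitivity (2^-1 * D i k + 2^-1 * D i k); first by field.
by rewrite E; ring.
Qed.

Lemma Sii i : SS D i i = 0.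
Proof.
have := deq D i i i HD; rewrite eqxx LV.1 /= mulr1n => E.
apply: (mulfI two); rewrite mulr0.
transitivity (D i i * 2^-1 + 1 * SS D i i + (1 * SS D i i + D i i * 2^-1) - (2^-1 * D i i + 2^-1 * D i i)); first by ring.
by rewrite -E; ring.
Qed.

Lemma combc (x y L1 R1 L2 R2 c1 c2 : F) : x != 2^-1 -> L1 = R1 -> L2 = R2 ->
  y - 2%:R * x * y = c1 * (L1 - R1) + c2 * (L2 - R2) -> y = 0.
Proof.
move=> nx -> -> h; apply: (@canc x y nx); apply/eqP; rewrite -subr_eq0 h !subrr; apply/eqP; ring.
Qed.

Lemma comb0 (y L1 R1 L2 R2 c1 c2 : F) : L1 = R1 -> L2 = R2 ->
  y = c1 * (L1 - R1) + c2 * (L2 - R2) -> y = 0.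
Proof. by move=> -> -> ->; rewrite !subrr; ring. Qed.
End S.

Lemma ordeq m n (p : (m < 5)%N) (q : (n < 5)%N) : (Ordinal p == Ordinal q) = (m == n).
Proof. by []. Qed.

Lemma sum5 (F : fieldType) (f : 'I_5 -> F) : \sum_(m < 5) f m =
  f (@Ordinal 5 0 isT) + f (@Ordinal 5 1 isT) + f (@Ordinal 5 2 isT) + f (@Ordinal 5 3 isT) + f (@Ordinal 5 4 isT).
Proof.
rewrite (bigD1 (@Ordinal 5 0 isT)) // (bigD1 (@Ordinal 5 1 isT)) // (bigD1 (@Ordinal 5 2 isT)) //.
rewrite (bigD1 (@Ordinal 5 3 isT)) // (bigD1 (@Ordinal 5 4 isT)) // big_pred0.
  by rewrite /= addr0 !addrA.
by case=> [[|[|[|[|[|?]]]]] ?].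
Qed.
Notation o0 := (@Ordinal 5 0 isT).
Notation o1 := (@Ordinal 5 1 isT).
Notation o2 := (@Ordinal 5 2 isT).
Notation o3 := (@Ordinal 5 3 isT).
Notation o4 := (@Ordinal 5 4 isT).

Theorem mainTheorem17 (F : fieldType) (a : 'M[F]_5) :
  (2%:R : F) != 0 ->
  is_LV a ->
  lv_mul a (@e F (@Ordinal 5 1 isT)) (@e F (@Ordinal 5 3 isT))
    = 2^-1 *: (@e F (@Ordinal 5 1 isT) + @e F (@Ordinal 5 3 isT)) ->
  lv_mul a (@e F (@Ordinal 5 1 isT)) (@e F (@Ordinal 5 4 isT))
    = 2^-1 *: (@e F (@Ordinal 5 1 isT) + @e F (@Ordinal 5 4 isT)) ->
  (forall i j : 'I_5, i != j ->
     ~~ [|| [&& val i == 1%N & val j == 3%N], [&& val i == 3%N & val j == 1%N],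
            [&& val i == 1%N & val j == 4%N] | [&& val i == 4%N & val j == 1%N]] ->
     lv_mul a (@e F i) (@e F j) != 2^-1 *: (@e F i + @e F j)) ->
  forall D : 'M[F]_5, is_derivation a D -> D = 0.
Proof.
move=> two LV H13 H14 H5 D HD.
have aii : forall i, a i i = 2^-1 := LV.1.
have [a13 a31] := @aspec F a two LV o1 o3 isT H13.
have [a14 a41] := @aspec F a two LV o1 o4 isT H14.
have N p q (h1 : p != q) h2 : a p q != 2^-1 := @aneq F a two LV p q h1 (H5 p q h1 h2).
have Z p q (h1 : q != p) h2 : D p q = 0 := @step1 F a two LV D HD p q h1 (N q p h1 h2).
have d01 := Z o0 o1 isT isT.
have d02 := Z o0 o2 isT isT.
have d03 := Z o0 o3 isT isT.
have d04 := Z o0 o4 isT isT.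
have d10 := Z o1 o0 isT isT.
have d12 := Z o1 o2 isT isT.
have d20 := Z o2 o0 isT isT.
have d21 := Z o2 o1 isT isT.
have d23 := Z o2 o3 isT isT.
have d24 := Z o2 o4 isT isT.
have d30 := Z o3 o0 isT isT.
have d32 := Z o3 o2 isT isT.
have d34 := Z o3 o4 isT isT.
have d40 := Z o4 o0 isT isT.
have d42 := Z o4 o2 isT isT.
have d43 := Z o4 o3 isT isT.
have d13 : D o1 o3 = 0.
have E1 := @deq F a D o1 o4 o3 HD; rewrite !ordeq /= ?mulr1n ?mulr0n /SS !sum5 in E1.
have E2 : (0:F) = 0 by [].
  apply: (@combc F two (a o3 o4) _ _ _ _ _ (2) (0) (N o3 o4 isT isT) E1 E2).
  by rewrite ?(d01, d02, d03, d04, d10, d12, d20, d21, d23, d24, d30, d32, d34, d40, d42, d43, a13, a31, a14, a41, aii); field.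
have d14 : D o1 o4 = 0.
have E1 := @deq F a D o1 o3 o4 HD; rewrite !ordeq /= ?mulr1n ?mulr0n /SS !sum5 in E1.
have E2 : (0:F) = 0 by [].
  apply: (@combc F two (a o4 o3) _ _ _ _ _ (2) (0) (N o4 o3 isT isT) E1 E2).
  by rewrite ?(d01, d02, d03, d04, d10, d12, d20, d21, d23, d24, d30, d32, d34, d40, d42, d43, d13, a13, a31, a14, a41, aii); field.
have d11 : D o1 o1 = 0.
have E1 := @Sii F a two LV D HD o1; rewrite /SS sum5 in E1.
have E2 : (0:F) = 0 by [].
  apply: (@comb0 F _ _ _ _ _ (2) 0 E1 E2).
  by rewrite ?(d01, d02, d03, d04, d10, d12, d20, d21, d23, d24, d30, d32, d34, d40, d42, d43, d13, d14, a13, a31, a14, a41, aii); field.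
have d41 : D o4 o1 = 0.
have E1 := @deq F a D o3 o4 o3 HD; rewrite !ordeq /= ?mulr1n ?mulr0n /SS !sum5 in E1.
have E2 := @Sii F a two LV D HD o4; rewrite /SS sum5 in E2.
  apply: (@combc F two (a o3 o4) _ _ _ _ _ (-2) (-4 * a o3 o4) (N o3 o4 isT isT) E1 E2).
  by rewrite ?(d01, d02, d03, d04, d10, d12, d20, d21, d23, d24, d30, d32, d34, d40, d42, d43, d13, d14, d11, a13, a31, a14, a41, aii); field.
have d44 : D o4 o4 = 0.
have E1 := @Sii F a two LV D HD o4; rewrite /SS sum5 in E1.
have E2 : (0:F) = 0 by [].
  apply: (@comb0 F _ _ _ _ _ (2) 0 E1 E2).
  by rewrite ?(d01, d02, d03, d04, d10, d12, d20, d21, d23, d24, d30, d32, d34, d40, d42, d43, d13, d14, d11, d41, a13, a31, a14, a41, aii); field.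
have d31 : D o3 o1 = 0.
have E1 := @deq F a D o3 o4 o4 HD; rewrite !ordeq /= ?mulr1n ?mulr0n /SS !sum5 in E1.
have E2 := @Sii F a two LV D HD o3; rewrite /SS sum5 in E2.
  apply: (@combc F two (a o4 o3) _ _ _ _ _ (-2) (-4 * a o4 o3) (N o4 o3 isT isT) E1 E2).
  by rewrite ?(d01, d02, d03, d04, d10, d12, d20, d21, d23, d24, d30, d32, d34, d40, d42, d43, d13, d14, d11, d41, d44, a13, a31, a14, a41, aii); field.
have d33 : D o3 o3 = 0.
have E1 := @Sii F a two LV D HD o3; rewrite /SS sum5 in E1.
have E2 : (0:F) = 0 by [].
  apply: (@comb0 F _ _ _ _ _ (2) 0 E1 E2).
  by rewrite ?(d01, d02, d03, d04, d10, d12, d20, d21, d23, d24, d30, d32, d34, d40, d42, d43, d13, d14, d11, d41, d44, d31, a13, a31, a14, a41, aii); field.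
have d00 : D o0 o0 = 0.
have E1 := @Sii F a two LV D HD o0; rewrite /SS sum5 in E1.
have E2 : (0:F) = 0 by [].
  apply: (@comb0 F _ _ _ _ _ (2) 0 E1 E2).
  by rewrite ?(d01, d02, d03, d04, d10, d12, d20, d21, d23, d24, d30, d32, d34, d40, d42, d43, d13, d14, d11, d41, d44, d31, d33, a13, a31, a14, a41, aii); field.
have d22 : D o2 o2 = 0.
have E1 := @Sii F a two LV D HD o2; rewrite /SS sum5 in E1.
have E2 : (0:F) = 0 by [].
  apply: (@comb0 F _ _ _ _ _ (2) 0 E1 E2).
  by rewrite ?(d01, d02, d03, d04, d10, d12, d20, d21, d23, d24, d30, d32, d34, d40, d42, d43, d13, d14, d11, d41, d44, d31, d33, d00, a13, a31, a14, a41, aii); field.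
apply/matrixP => i j; rewrite mxE.
case: i => [[|[|[|[|[|//]]]]] Hi]; case: j => [[|[|[|[|[|//]]]]] Hj];
  rewrite (bool_irrelevance Hi isT) (bool_irrelevance Hj isT);
  by rewrite ?(d01, d02, d03, d04, d10, d12, d20, d21, d23, d24, d30, d32, d34, d40, d42, d43, d13, d14, d11, d41, d44, d31, d33, d00, d22).
Qed.
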